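(* Let $F$ be the unique series in $\mathbb{Q}[x,\bar x,y,\bar y][[t]]$ satisfying $(1-St)F=\bar x\bar y-\bar x t[x^0]F-\bar y t[y^0]F$, and let $F_1=[x^<][y^<]F$. Then $$F_1(x,y,t)=\bar x\bar y\,Q(\bar x,\bar y,t),$$ where $Q(x,y,t)=\sum_{n\ge0}\sum_{i,j\ge0}a_{i,j,n}x^iy^jt^n$ and $a_{i,j,n}$ is the number of walks in $\mathbb{N}^2$ starting at $(0,0)$, ending at $(i,j)$, with $n$ steps from $\{(1,0),(-1,0),(0,1),(0,-1)\}$. Moreover $$F_1(x,y,t)-F_1(\bar x,y,t)=[y^<]\,\frac{xy-\bar xy-x\bar y+\bar x\bar y}{1-St}.$$
   Context: Notation: $\bar x=x^{-1}$, $\bar y=y^{-1}$, $S=x+y+\bar x+\bar y$; series in $\mathbb{Q}[x,\bar x,y,\bar y][[t]]$, with $1/(1-St)$ expanded as a power series in $t$. For $G=\sum c_{i,j,n}x^iy^jt^n$: $[x^0]G=\sum_{j,n}c_{0,j,n}y^jt^n$, $[y^0]G=\sum_{i,n}c_{i,0,n}x^it^n$; $[x^<]G=\sum_{i<0}c_{i,j,n}x^iy^jt^n$ (terms with negative $x$-exponent), and analogously $[y^<]$ for $y$. *)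

(* Defs.v *)
From mathcomp Require Import all_boot all_algebra.
Set Implicit Arguments. Unset Strict Implicit. Unset Printing Implicit Defensive.
Import GRing.Theory Num.Theory.
Local Open Scope ring_scope.

(* A series sum_{i,j,n} c i j n x^i y^j t^n with i,j in Z, n in N, rational coefficients. *)
Definition ser := int -> int -> nat -> rat.

(* Membership in Q[x,xbar,y,ybar][[t]]: each t^n-coefficient is a Laurent polynomial. *)
Definition laurent_ser (F : ser) : Prop :=
  forall n : nat, exists B : nat, forall i j : int,
    ((B < `|i|)%N || (B < `|j|)%N) -> F i j n = 0.

Definition sadd (F G : ser) : ser := fun i j n => F i j n + G i j n.
Definition ssub (F G : ser) : ser := fun i j n => F i j n - G i j n.
Definition mulx (F : ser) : ser := fun i j n => F (i - 1) j n.
Definition mulxb (F : ser) : ser := fun i j n => F (i + 1) j n.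
Definition muly (F : ser) : ser := fun i j n => F i (j - 1) n.
Definition mulyb (F : ser) : ser := fun i j n => F i (j + 1) n.
Definition mult (F : ser) : ser :=
  fun i j n => match n with 0%N => 0 | n'.+1 => F i j n' end.
Definition mulS (F : ser) : ser := sadd (sadd (mulx F) (mulxb F)) (sadd (muly F) (mulyb F)).
Definition mono (a b : int) : ser :=
  fun i j n => if (i == a) && (j == b) && (n == 0)%N then 1 else 0.
Definition coef_x0 (F : ser) : ser := fun i j n => if i == 0 then F 0 j n else 0.
Definition coef_y0 (F : ser) : ser := fun i j n => if j == 0 then F i 0 n else 0.
Definition neg_x (F : ser) : ser := fun i j n => if i < 0 then F i j n else 0.
Definition neg_y (F : ser) : ser := fun i j n => if j < 0 then F i j n else 0.
Definition subst_xinv (F : ser) : ser := fun i j n => F (- i) j n.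
Definition subst_xyinv (F : ser) : ser := fun i j n => F (- i) (- j) n.
(* 1/(1 - S t) = sum_n S^n t^n *)
Definition inv_1_St : ser := fun i j n => iter n mulS (mono 0 0) i j 0%N.

Definition F_eqn (F : ser) : Prop :=
  ssub F (mult (mulS F)) =
  ssub (ssub (mono (-1) (-1)) (mulxb (mult (coef_x0 F)))) (mulyb (mult (coef_y0 F))).

Definition step (k : 'I_4) : int * int :=
  match val k with
  | 0%N => ((1 : int), (0 : int))
  | 1%N => ((-1 : int), (0 : int))
  | 2%N => ((0 : int), (1 : int))
  | _ => ((0 : int), (-1 : int))
  end.
Definition add_pt (p q : int * int) : int * int := (p.1 + q.1, p.2 + q.2).
Definition positions (w : seq 'I_4) : seq (int * int) :=
  scanl (fun p k => add_pt p (step k)) ((0 : int), (0 : int)) w.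
Definition in_quadrant (p : int * int) : bool := (0 <= p.1) && (0 <= p.2).
Definition endpoint (w : seq 'I_4) : int * int := last ((0 : int), (0 : int)) (positions w).
Definition nwalks (n : nat) (i j : int) : nat :=
  #|[set w : n.-tuple 'I_4 | all in_quadrant (positions w) & endpoint w == (i, j)]|.

Definition Qser : ser := fun i j n => if (0 <= i) && (0 <= j) then (nwalks n i j)%:R else 0.

Definition F1_of (F : ser) : ser := neg_x (neg_y F).

Definition mul_num (G : ser) : ser :=
  sadd (ssub (ssub (mulx (muly G)) (mulxb (muly G))) (mulx (mulyb G))) (mulxb (mulyb G)).

(* Main.v *)
Require Import Defs.
From mathcomp Require Import all_boot all_order all_algebra.
From mathcomp Require Import ring lra zify.
From Stdlib Require Import FunctionalExtensionality.
Set Implicit Arguments. Unset Strict Implicit. Unset Printing Implicit Defensive.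
Import Order.TTheory GRing.Theory Num.Theory.
Local Open Scope ring_scope.

Fixpoint Fn (n : nat) (i j : int) : rat :=
  match n with
  | 0%N => if (i == -1) && (j == -1) then 1 else 0
  | n'.+1 => Fn n' (i - 1) j + Fn n' (i + 1) j + (Fn n' i (j - 1) + Fn n' i (j + 1))
             - (if i + 1 == 0 then Fn n' 0 j else 0)
             - (if j + 1 == 0 then Fn n' i 0 else 0)
  end.

Definition Fsol : ser := fun i j n => Fn n i j.

Lemma Fsol_eqn : F_eqn Fsol.
Proof.
apply: functional_extensionality => i; apply: functional_extensionality => j.
apply: functional_extensionality => n.
rewrite /ssub /mult /mulS /sadd /mulx /mulxb /muly /mulyb /mono /coef_x0 /coef_y0 /Fsol.
case: n => [|n] /=.
  by rewrite eqxx andbT !subr0.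
have -> : (n.+1 == 0%N) = false by [].
rewrite andbF /=. set a := Fn n (i-1) j. set b := Fn n (i+1) j. set c := Fn n i (j-1). set d := Fn n i (j+1). set e := (if _ then _ else _). set f := (if _ then _ else _). ring.
Qed.

Lemma Fsol_laurent : laurent_ser Fsol.
Proof.
move=> n; exists n.+1; rewrite /Fsol; elim: n => [|n IH] i j /=.
  move=> h; case: eqP => [hi|]; case: eqP => [hj|] //=; subst; by [].
move=> h.
have h1 : Fn n (i - 1) j = 0 by apply: IH; lia.
have h2 : Fn n (i + 1) j = 0 by apply: IH; lia.
have h3 : Fn n i (j - 1) = 0 by apply: IH; lia.
have h4 : Fn n i (j + 1) = 0 by apply: IH; lia.
rewrite h1 h2 h3 h4.
case: eqP => [hi|_]; case: eqP => [hj|_].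
- lia.
- rewrite IH //; lia.
- rewrite IH //; lia.
- by [].
Qed.

Lemma uniq_sol (G : ser) : F_eqn G -> G = Fsol.
Proof.
move=> hG.
have key : forall i j n, G i j n = mult (mulS G) i j n +
  ssub (ssub (mono (-1) (-1)) (mulxb (mult (coef_x0 G)))) (mulyb (mult (coef_y0 G))) i j n.
  move=> i j n; rewrite -hG /ssub; ring.
apply: functional_extensionality => i; apply: functional_extensionality => j.
apply: functional_extensionality => n.
rewrite /Fsol; elim: n i j => [|n IH] i j.
  rewrite key /= /ssub /mono /mulxb /mulyb /mult /=; rewrite andbT; ring.
rewrite key /= /ssub /mono /mulxb /mulyb /mult /mulS /sadd /mulx /mulxb /muly /mulyb
  /coef_x0 /coef_y0 /=.
rewrite !IH andbF.
case: eqP => _; case: eqP => _; rewrite ?IH; ring.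
Qed.
Definition fstep (p : int * int) (k : 'I_4) := add_pt p (step k).

Lemma endpoint_foldl (w : seq 'I_4) : endpoint w = foldl fstep (0, 0) w.
Proof.
case/lastP: w => [|w k] //.
by rewrite /endpoint /positions scanl_rcons last_rcons.
Qed.

Lemma positions_rcons (w : seq 'I_4) k :
  positions (rcons w k) = rcons (positions w) (fstep (endpoint w) k).
Proof. by rewrite /positions scanl_rcons endpoint_foldl foldl_rcons. Qed.

Lemma endpoint_rcons (w : seq 'I_4) k : endpoint (rcons w k) = fstep (endpoint w) k.
Proof. by rewrite {1}/endpoint positions_rcons last_rcons. Qed.

Definition bw n (w : n.-tuple 'I_4) (p : int * int) : bool :=
  all in_quadrant (positions w) && (endpoint w == p).

Lemma nwalks_sum n i j : nwalks n i j = \sum_(w : n.-tuple 'I_4) (bw w (i, j) : nat).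
Proof.
rewrite /nwalks -sum1_card big_mkcond /=; apply: eq_bigr => w _.
by rewrite inE /bw; case: (_ && _).
Qed.

Lemma nwalks0 i j : nwalks 0 i j = ((i == 0) && (j == 0) : nat).
Proof.
rewrite nwalks_sum (eq_bigr (fun _ => ((i == 0) && (j == 0) : nat))).
  by rewrite sum_nat_const card_tuple expn0 mul1n.
move=> w _; rewrite tuple0 /bw /= /endpoint /=.
by rewrite xpair_eqE (eq_sym 0 i) (eq_sym 0 j).
Qed.

Lemma endpoint_in n (w : n.-tuple 'I_4) p : bw w p -> in_quadrant p.
Proof.
rewrite /bw => /andP[ha /eqP <-].
rewrite /endpoint.
have : last (0, 0) (positions w) \in ((0:int), (0:int)) :: positions w by apply: mem_last.
rewrite inE => /orP[/eqP -> //| hm].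
by move/allP: ha; apply.
Qed.

Lemma nwalks_out n i j : ~~ in_quadrant (i, j) -> nwalks n i j = 0%N.
Proof.
move=> h; rewrite nwalks_sum big1 // => w _.
by case hb: (bw w (i, j)) => //; move: h; rewrite (endpoint_in hb).
Qed.

Lemma nwalksS n i j : nwalks n.+1 i j =
  (in_quadrant (i, j) : nat) *
  \sum_(k < 4) nwalks n (i - (step k).1) (j - (step k).2).
Proof.
pose h (p : 'I_4 * n.-tuple 'I_4) : n.+1.-tuple 'I_4 :=
  [tuple of rcons p.2 p.1].
have hinj : injective h.
  move=> [k1 w1] [k2 w2] /(congr1 val) /= /rcons_inj [/val_inj -> ->] //.
have hbij : bijective h.
  apply: (inj_card_bij hinj).
  by rewrite card_prod !card_tuple card_ord expnS.
rewrite nwalks_sum (reindex h) /=; last by apply: onW_bij.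
rewrite -(pair_big predT predT (fun k w => (bw (h (k, w)) (i, j) : nat))) /=.
rewrite big_distrr /=; apply: eq_bigr => k _.
rewrite nwalks_sum big_distrr /=; apply: eq_bigr => w _.
rewrite /bw /= positions_rcons endpoint_rcons all_rcons.
rewrite /fstep /add_pt.
case: (endpoint w) => a b /=.
rewrite !xpair_eqE.
have e1 : (a + (step k).1 == i) = (a == i - (step k).1).
  apply/eqP/eqP => [<-|->]; ring.
have e2 : (b + (step k).2 == j) = (b == j - (step k).2).
  apply/eqP/eqP => [<-|->]; ring.
rewrite e1 e2.
case: eqP => [->|_] /=; last by rewrite !andbF; case: in_quadrant.
case: eqP => [->|_] /=; last by rewrite !andbF; case: in_quadrant.
have -> : (i - (step k).1 + (step k).1, j - (step k).2 + (step k).2) = (i, j).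
  by rewrite !subrK.
by case: (all _ _); case: (in_quadrant _).
Qed.

Lemma Qser_nat n i j : Qser i j n = (nwalks n i j)%:R.
Proof.
rewrite /Qser; case: ifP => // h.
by rewrite nwalks_out // /in_quadrant /= h.
Qed.

Lemma Qser0 i j : Qser i j 0 = if (i == 0) && (j == 0) then 1 else 0.
Proof. by rewrite Qser_nat nwalks0; case: (_ && _). Qed.

Lemma QserS n i j : Qser i j n.+1 = if (0 <= i) && (0 <= j) then
  Qser (i - 1) j n + Qser (i + 1) j n + (Qser i (j - 1) n + Qser i (j + 1) n) else 0.
Proof.
rewrite !Qser_nat nwalksS !big_ord_recl big_ord0 /=.
rewrite /in_quadrant /=.
case: (_ && _) => /=; last by rewrite mul0r.
rewrite mul1r addr0 !natrD !subr0 !opprK.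
by rewrite addrA.
Qed.

Definition g n i j : rat := if i < 0 then if j < 0 then Fn n i j else 0 else 0.
Definition q n i j : rat := Qser (- (i + 1)) (- (j + 1)) n.

Lemma g_ge0 n i j : (0 <= i) || (0 <= j) -> g n i j = 0.
Proof.
rewrite /g; case/orP => h.
  by rewrite ltNge h.
by case: (i < 0) => //; rewrite ltNge h.
Qed.

Lemma g0 i j : g 0 i j = if (i == -1) && (j == -1) then 1 else 0.
Proof.
rewrite /g /=; case: (eqVneq i (-1)) => [->|hi] /=; case: (eqVneq j (-1)) => [->|hj] //=.
all: by do ?case: ifP.
Qed.

Lemma g_rec n i j : g n.+1 i j = if (i < 0) && (j < 0) then
  g n (i - 1) j + g n (i + 1) j + (g n i (j - 1) + g n i (j + 1)) else 0.
Proof.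
rewrite /g; case hi: (i < 0) => //=; case hj: (j < 0) => //=.
have -> : (i - 1 < 0) = true by lia.
have -> : (j - 1 < 0) = true by lia.
case: (eqVneq (i + 1) 0) => [e1|e1]; case: (eqVneq (j + 1) 0) => [e2|e2].
- rewrite e1 e2 ltxx.
  set a := Fn n (i - 1) j; set b := Fn n 0 j; set c := Fn n i (j - 1); set d := Fn n i 0.
  ring.
- have -> : (j + 1 < 0) = true by lia.
  rewrite e1 ltxx.
  set a := Fn n (i - 1) j; set b := Fn n 0 j; set c := Fn n i (j - 1); set d := Fn n i (j+1).
  ring.
- have -> : (i + 1 < 0) = true by lia.
  rewrite e2 ltxx.
  set a := Fn n (i - 1) j; set b := Fn n (i+1) j; set c := Fn n i (j - 1); set d := Fn n i 0.
  ring.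
- have -> : (i + 1 < 0) = true by lia.
  have -> : (j + 1 < 0) = true by lia.
  set a := Fn n (i - 1) j; set b := Fn n (i+1) j; set c := Fn n i (j - 1); set d := Fn n i (j+1).
  ring.
Qed.

Lemma q_rec n i j : q n.+1 i j = if (i < 0) && (j < 0) then
  q n (i - 1) j + q n (i + 1) j + (q n i (j - 1) + q n i (j + 1)) else 0.
Proof.
rewrite /q QserS.
have -> : (0 <= - (i + 1)) = (i < 0) by apply/idP/idP => h; lia.
have -> : (0 <= - (j + 1)) = (j < 0) by apply/idP/idP => h; lia.
case: (_ && _) => //.
have -> : - (i + 1) - 1 = - ((i + 1) + 1) by ring.
have -> : - (i + 1) + 1 = - ((i - 1) + 1) by ring.
have -> : - (j + 1) - 1 = - ((j + 1) + 1) by ring.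
have -> : - (j + 1) + 1 = - ((j - 1) + 1) by ring.
set a := Qser (- (i + 1 + 1)) (- (j + 1)) n.
set b := Qser (- (i - 1 + 1)) (- (j + 1)) n.
set c := Qser (- (i + 1)) (- (j + 1 + 1)) n.
set d := Qser (- (i + 1)) (- (j - 1 + 1)) n.
ring.
Qed.

Lemma gq n i j : g n i j = q n i j.
Proof.
elim: n i j => [|n IH] i j.
  rewrite g0 /q Qser0.
  have -> : (- (i + 1) == 0) = (i == -1) by apply/eqP/eqP => h; lia.
  by have -> : (- (j + 1) == 0) = (j == -1) by apply/eqP/eqP => h; lia.
by rewrite g_rec q_rec !IH.
Qed.

Definition U n i j : rat := inv_1_St i j n.

Lemma U_rec n i j : U n.+1 i j = U n (i - 1) j + U n (i + 1) j + (U n i (j - 1) + U n i (j + 1)).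
Proof. by []. Qed.

Lemma U_sym n i j : U n i (- j) = U n i j.
Proof.
elim: n i j => [|n IH] i j.
  by rewrite /U /inv_1_St /= /mono oppr_eq0.
rewrite !U_rec !IH.
have -> : - j - 1 = - (j + 1) by ring.
have -> : - j + 1 = - (j - 1) by ring.
rewrite !IH.
set a := U n (i - 1) j; set b := U n (i + 1) j; set c := U n i (j - 1); set d := U n i (j + 1).
ring.
Qed.

Definition V n i j : rat :=
  U n (i - 1) (j - 1) - U n (i + 1) (j - 1) - U n (i - 1) (j + 1) + U n (i + 1) (j + 1).

Lemma V_j0 n i : V n i 0 = 0.
Proof.
rewrite /V sub0r add0r !U_sym.
set a := U n (i - 1) 1; set b := U n (i + 1) 1.
ring.
Qed.

Lemma V_rec n i j : V n.+1 i j = V n (i - 1) j + V n (i + 1) j + (V n i (j - 1) + V n i (j + 1)).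
Proof.
have e1 : forall x : int, x - 1 + 1 = x by move=> x; ring.
have e2 : forall x : int, x + 1 - 1 = x by move=> x; ring.
rewrite /V !U_rec !e1 !e2.
repeat match goal with |- context [U ?n ?a ?b] => let x := fresh "x" in set x := U n a b end.
ring.
Qed.

Definition H n i j : rat := g n i j - g n (- i) j.

Lemma H_rec n i j : j < 0 ->
  H n.+1 i j = H n (i - 1) j + H n (i + 1) j + (H n i (j - 1) + H n i (j + 1)).
Proof.
move=> hj; rewrite /H.
have -> : - (i - 1) = - i + 1 by ring.
have -> : - (i + 1) = - i - 1 by ring.
case: (ltgtP i 0) => hi.
- rewrite !g_rec hi hj /=.
  have -> : (- i < 0) = false by lia.
  rewrite (@g_ge0 n (- i + 1) j); last by apply/orP; left; lia.
  rewrite (@g_ge0 n (- i - 1) j); last by apply/orP; left; lia.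
  rewrite (@g_ge0 n (- i) (j - 1)); last by apply/orP; left; lia.
  rewrite (@g_ge0 n (- i) (j + 1)); last by apply/orP; left; lia.
  by rewrite !subr0.
- rewrite !g_rec hj /=.
  have -> : (i < 0) = false by lia.
  have -> : (- i < 0) = true by lia.
  rewrite (@g_ge0 n (i - 1) j); last by apply/orP; left; lia.
  rewrite (@g_ge0 n (i + 1) j); last by apply/orP; left; lia.
  rewrite (@g_ge0 n i (j - 1)); last by apply/orP; left; lia.
  rewrite (@g_ge0 n i (j + 1)); last by apply/orP; left; lia.
  rewrite /=.
  set a := g n (- i - 1) j; set b := g n (- i + 1) j.
  set c := g n (- i) (j - 1); set d := g n (- i) (j + 1).
  ring.
- subst i; rewrite !oppr0 subrr add0r sub0r.
  set a := g n (0 - 1) j; set b := g n (0 + 1) j.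
  set c := g n 0 (j - 1); set d := g n 0 (j + 1).
  ring.
Qed.

Lemma VH n i j : j <= 0 -> V n i j = H n i j.
Proof.
elim: n i j => [|n IH] i j hj.
  rewrite /V /H !g0 /U /inv_1_St /= /mono !andbT.
  have -> : (j - 1 == 0) = false by apply/negbTE; lia.
  rewrite !andbF.
  have -> : (j + 1 == 0) = (j == -1) by apply/eqP/eqP => h; lia.
  have -> : (i - 1 == 0) = (i == 1) by apply/eqP/eqP => h; lia.
  have -> : (i + 1 == 0) = (i == -1) by apply/eqP/eqP => h; lia.
  have -> : (- i == -1) = (i == 1) by apply/eqP/eqP => h; lia.
  case: (j == -1); rewrite ?andbF ?andbT; last by rewrite !subr0.
  by case: (i == 1); case: (i == -1) => /=; ring.
case: (ltgtP j 0) => hj'; last first.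
- subst j; rewrite V_j0 /H !g_ge0 ?subrr //; by rewrite lexx orbT.
- lia.
rewrite V_rec H_rec // !IH //; lia.
Qed.

Theorem mainTheorem2 :
  (exists! F : ser, laurent_ser F /\ F_eqn F) /\
  (forall F : ser, laurent_ser F -> F_eqn F ->
     F1_of F = mulxb (mulyb (subst_xyinv Qser)) /\
     ssub (F1_of F) (subst_xinv (F1_of F)) = neg_y (mul_num inv_1_St)).
Proof.
split.
  exists Fsol; split; first by split; [exact: Fsol_laurent | exact: Fsol_eqn].
  by move=> G [_ hG]; rewrite (uniq_sol hG).
move=> F _ hF; rewrite (uniq_sol hF); split.
  apply: functional_extensionality => i; apply: functional_extensionality => j.
  apply: functional_extensionality => n.
  exact: (gq n i j).
apply: functional_extensionality => i; apply: functional_extensionality => j.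
apply: functional_extensionality => n.
rewrite /neg_y; case: ifP => hj.
  exact: (esym (VH n i (ltW hj))).
rewrite /ssub /subst_xinv /F1_of /neg_x /neg_y hj.
by case: (i < 0); case: (- i < 0).
Qed.
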